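(* Let $d,n\ge 1$, let $\mathbf{x}_1,\ldots,\mathbf{x}_n\in\mathbb{R}^d$ (column vectors), $y_1,\ldots,y_n\in\mathbb{R}$, $\eta>0$, and $\mathbf{w}^{(0)}\in\mathbb{R}^{1\times d}$ arbitrary. Consider the linear self-attention layer acting on a sequence $(\mathbf{z}_1,\ldots,\mathbf{z}_n)$ of vectors in $\mathbb{R}^{d+1}$ by $$\mathbf{z}_j\leftarrow \mathbf{z}_j+\mathbf{P}\mathbf{V}\sum_{i=1}^n \mathbf{z}_i\left(\mathbf{z}_i^\top\mathbf{K}^\top\mathbf{Q}\mathbf{z}_j\right),\qquad j=1,\ldots,n,$$ with parameters $$\mathbf{K}=\mathbf{Q}=\begin{pmatrix}\mathbf{I}_{d\times d}&\mathbf{0}\\ 0&0\end{pmatrix},\quad \mathbf{V}=\begin{pmatrix}\mathbf{0}_{d\times d}&\mathbf{0}\\ \mathbf{w}^{(0)}&-1\end{pmatrix},\quad \mathbf{P}=\frac{\eta}{n}\mathbf{I}.$$ Apply $l$ such layers in succession (all with these same parameters) to the input $\mathbf{z}_j^{(0)}=(\mathbf{x}_j^\top,y_j)^\top$, $j=1,\ldots,n$, and denote by $\mathbf{z}_j^{(l)}$ the output of the $l$-th layer. Define $\mathbf{w}^{(l)}$ for $l\ge1$ by $$\mathbf{w}^{(l)}=\mathbf{w}^{(l-1)}+\frac{\eta}{n}\sum_{i=1}^n\left(y_i-\mathbf{w}^{(l-1)}\mathbf{x}_i\right)\mathbf{x}_i^\top.$$ Then for every $l\ge 0$ and every $j$,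 $\mathbf{z}_j^{(l)}=(\mathbf{x}_j^\top,\delta_j^{(l)})^\top$ where $\delta_j^{(l)}=y_j-(\mathbf{w}^{(l)}-\mathbf{w}^{(0)})\mathbf{x}_j$.
   Context: Weight vectors are $1\times d$ row vectors and inputs are $d\times 1$ column vectors, so $\mathbf{w}\mathbf{x}_i$ is a scalar. The recursion for $\mathbf{w}^{(l)}$ is gradient descent with step size $\eta$, started at $\mathbf{w}^{(0)}$, on the least-squares loss $\frac{1}{2n}\sum_{i=1}^n(\mathbf{w}\mathbf{x}_i-y_i)^2$. *)

(* Defs.v *)
From HB Require Import structures.
From mathcomp Require Import all_boot all_order all_algebra.
From mathcomp Require Import reals.
Set Implicit Arguments. Unset Strict Implicit. Unset Printing Implicit Defensive.
Import Order.TTheory GRing.Theory Num.Theory.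
Local Open Scope ring_scope.

Section LSA.
Variables (R : realType) (d n : nat).

Definition KQ_mx : 'M[R]_(d + 1) := block_mx (1%:M : 'M[R]_d) 0 0 0.

Definition V_mx (w0 : 'rV[R]_d) : 'M[R]_(d + 1) :=
  block_mx (0 : 'M[R]_d) 0 w0 (-1)%:M.

Definition P_mx (eta : R) : 'M[R]_(d + 1) := (eta / n%:R) *: 1%:M.

Definition lsa_layer (P V K Q : 'M[R]_(d + 1))
    (z : 'I_n -> 'cV[R]_(d + 1)) : 'I_n -> 'cV[R]_(d + 1) :=
  fun j => z j + P *m V *m
     (\sum_(i < n) (((z i)^T *m K^T *m Q *m z j) 0 0) *: z i).

Definition lsa_iter (eta : R) (w0 : 'rV[R]_d) (l : nat)
    (z : 'I_n -> 'cV[R]_(d + 1)) : 'I_n -> 'cV[R]_(d + 1) :=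
  iter l (lsa_layer (P_mx eta) (V_mx w0) KQ_mx KQ_mx) z.

Definition lsa_input (x : 'I_n -> 'cV[R]_d) (y : 'I_n -> R) :
    'I_n -> 'cV[R]_(d + 1) :=
  fun j => col_mx (x j) (y j)%:M.

Definition gd_step (eta : R) (x : 'I_n -> 'cV[R]_d) (y : 'I_n -> R)
    (w : 'rV[R]_d) : 'rV[R]_d :=
  w + (eta / n%:R) *: \sum_(i < n) (y i - (w *m x i) 0 0) *: (x i)^T.

Definition gd_iter (eta : R) (x : 'I_n -> 'cV[R]_d) (y : 'I_n -> R)
    (w0 : 'rV[R]_d) (l : nat) : 'rV[R]_d :=
  iter l (gd_step eta x y) w0.

End LSA.

(* Main.v *)
Require Import Defs.
From HB Require Import structures.
From mathcomp Require Import all_boot all_order all_algebra.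
From mathcomp Require Import reals.
From mathcomp Require Import ring.
Import Order.TTheory GRing.Theory Num.Theory.
Local Open Scope ring_scope.

Lemma sum_col_mx (R : realType) (I : Type) (r : seq I) m1 m2 n (A : I -> 'M[R]_(m1,n)) B :
  \sum_(i <- r) col_mx (A i) (B i) = col_mx (\sum_(i <- r) A i) (\sum_(i <- r) B i : 'M[R]_(m2,n)).
Proof.
elim: r => [|a r IH]; first by rewrite !big_nil col_mx0.
by rewrite !big_cons IH add_col_mx.
Qed.

Lemma kq_form (R : realType) d (a b : 'cV[R]_d) (s t : R) :
  ((col_mx a s%:M)^T *m (KQ_mx R d)^T *m KQ_mx R d *m col_mx b t%:M) 0 0 = (a^T *m b) 0 0.
Proof.
rewrite -!mulmxA /KQ_mx tr_block_mx !trmx0 trmx1 mul_block_col !mul0mx mul1mx !addr0.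
rewrite mul_block_col !mul0mx mul1mx !addr0 tr_col_mx mul_row_col mulmx0 addr0 //.
Qed.

Lemma v_form (R : realType) d (w0 : 'rV[R]_d) (a : 'cV[R]_d) (s : R) :
  V_mx w0 *m col_mx a s%:M = col_mx 0 ((w0 *m a) 0 0 - s)%:M.
Proof.
rewrite /V_mx mul_block_col !mul0mx addr0; congr col_mx.
apply/matrixP => i j; rewrite !ord1 !mxE big_ord1 !mxE /=.
by rewrite !mulr1n mulN1r.
Qed.

Lemma eD (R : realType) m p (A B : 'M[R]_(m,p)) i j : (A + B) i j = A i j + B i j.
Proof. by rewrite mxE. Qed.
Lemma eN (R : realType) m p (A : 'M[R]_(m,p)) i j : (- A) i j = - A i j.
Proof. by rewrite mxE. Qed.
Lemma eZ (R : realType) m p (c : R) (A : 'M[R]_(m,p)) i j : (c *: A) i j = c * A i j.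
Proof. by rewrite mxE. Qed.
Lemma eS (R : realType) (c : R) : (c%:M : 'M[R]_1) 0 0 = c.
Proof. by rewrite mxE mulr1n. Qed.

Theorem proposition6 (R : realType) (d n : nat) (hd : (1 <= d)%N) (hn : (1 <= n)%N)
    (x : 'I_n -> 'cV[R]_d) (y : 'I_n -> R) (eta : R) (heta : 0 < eta)
    (w0 : 'rV[R]_d) :
  forall (l : nat) (j : 'I_n),
    lsa_iter eta w0 l (lsa_input x y) j =
    col_mx (x j) (y j - ((gd_iter eta x y w0 l - w0) *m x j) 0 0)%:M.
Proof.
elim => [|l IH] j.
  by rewrite /= /lsa_input subrr mul0mx mxE subr0.
rewrite /lsa_iter /gd_iter !iterS -/(lsa_iter eta w0 l (lsa_input x y)) -/(gd_iter eta x y w0 l).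
rewrite /lsa_layer IH.
under eq_bigr => i _ do rewrite IH kq_form.
rewrite -mulmxA mulmx_sumr.
under eq_bigr => i _ do rewrite -scalemxAr v_form scale_col_mx scaler0.
rewrite sum_col_mx big1 // /P_mx scalemx1 mul_scalar_mx scale_col_mx scaler0 add_col_mx addr0.
congr col_mx.
set w := gd_iter eta x y w0 l.
apply/matrixP => a b; rewrite !ord1 /gd_step.
rewrite !eS [in RHS](addrAC w) [in RHS]mulmxDl.
rewrite -scalemxAl mulmx_suml.
under [in RHS]eq_bigr => i _ do rewrite -scalemxAl.
rewrite !(eD, eN, eZ, summxE, eS, mulmxBl).
under eq_bigr => i _ do rewrite !(eD, eN, eZ, eS, mulmxBl).
under [in RHS]eq_bigr => i _ do rewrite !(eD, eN, eZ, eS, mulmxBl).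
rewrite (eq_bigr (fun i => - ((y i - (w *m x i) 0 0) * ((x i)^T *m x j) 0 0))); last first.
  by move=> i _; ring.
rewrite sumrN.
set S := \sum_(i < n) _.
ring.
Qed.
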